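(* Let $\mathbb F$ be any field. Every regular $m\times n\times q$ spatial matrix $\mathcal A$ over $\mathbb F$ with $n\le 2$ and $q\le 2$ is equivalent to one of the following spatial matrices (given by their horizontal slices): (1) $\|\,[1]\,\|$ ($1\times1\times1$); (2) $\|I_2\|$ ($2\times2\times1$); (3) $\left\|\begin{bmatrix}1\\0\end{bmatrix}\middle|\begin{bmatrix}0\\1\end{bmatrix}\right\|$ ($2\times1\times2$); (4) $\|[1\ 0]\,|\,[0\ 1]\|$ ($1\times2\times2$); (5) $\left\|\begin{bmatrix}1&0\\0&1\\0&0\end{bmatrix}\middle|\begin{bmatrix}0&0\\0&0\\0&1\end{bmatrix}\right\|$ ($3\times2\times2$); (6) $\left\|\begin{bmatrix}1&0\\0&1\\0&0\end{bmatrix}\middle|\begin{bmatrix}0&0\\1&0\\0&1\end{bmatrix}\right\|$ ($3\times2\times2$); (7) $\left\|\begin{bmatrix}1&0\\0&1\\0&0\\0&0\end{bmatrix}\middle|\begin{bmatrix}0&0\\0&0\\1&0\\0&1\end{bmatrix}\right\|$ ($4\times2\times2$); (8) $\mathcal A(v):=\left\|\begin{bmatrix}1&0\\0&1\end{bmatrix}\middle|\begin{bmatrix}0&v\\1&0\end{bmatrix}\right\|$ with $v\in\mathbb F$ ($2\times2\times2$); (9) only when $\operatorname{char}\mathbb F=2$: $\mathcal B(v):=\left\|\begin{bmatrix}1&0\\0&1\end{bmatrix}\middle|\begin{bmatrix}0&v\\1&1\end{bmatrix}\right\|$ with $v\in\mathbb F$ ($2\times2\times2$). These spatial matrices are pairwise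 inequivalent except for the following cases: - If $\operatorname{char}\mathbb F\ne2$, then $\mathcal A(v)$ is equivalent to each $\mathcal A(v')$ with $v'=vz$ for some nonzero $z\in\{a^2: a\in\mathbb F\}$. - If $\operatorname{char}\mathbb F=2$, then $\mathcal A(v)$ is equivalent to each $\mathcal A(v')$ with $v'=\frac{\alpha v+\beta}{\gamma v+\delta}$, where $\alpha,\beta,\gamma,\delta\in\{a^2:a\in\mathbb F\}$, $\alpha\delta+\beta\gamma\ne0$ and $\gamma v+\delta\ne0$; and $\mathcal B(v)$ is equivalent to each $\mathcal B(v')$ with $v'=v+\beta+\beta^2$ for some $\beta\in\mathbb F$. In particular, if $\mathbb F$ is algebraically closed, then every regular $m\times n\times q$ spatial matrix with $n\le2$ and $q\le2$ is equivalent to exactly one of the spatial matrices (1)–(7), $\mathcal A(0)$, and $\left\|\begin{bmatrix}1&0\\0&0\end{bmatrix}\middle|\begin{bmatrix}0&0\\0&1\end{bmatrix}\right\|$ ($2\times2\times2$).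
   Context: An $m\times n\times q$ spatial matrix over $\mathbb F$ is an array $\mathcal A=[a_{ijk}]$ ($1\le i\le m$, $1\le j\le n$, $1\le k\le q$) with entries in $\mathbb F$; it is written as $\|A_1|\dots|A_q\|$ where $A_k=[a_{ijk}]_{ij}$ ($m\times n$) are its horizontal slices. Two $m\times n\times q$ spatial matrices $[a_{ijk}]$ and $[b_{ijk}]$ are equivalent if there are nonsingular matrices $R=[r_{ii'}]$ ($m\times m$), $S=[s_{jj'}]$ ($n\times n$), $T=[t_{kk'}]$ ($q\times q$) with $b_{i'j'k'}=\sum_{i,j,k}a_{ijk}r_{ii'}s_{jj'}t_{kk'}$ for all $i',j',k'$. The spatial matrix $\mathcal A$ is regular if each of the three sets $\{[a_{ijk}]_{ij}:1\le k\le q\}$ (its $m\times n$ slices), $\{[a_{ijk}]_{ik}:1\le j\le n\}$ (its $m\times q$ slices) and $\{[a_{ijk}]_{jk}:1\le i\le m\}$ (its $n\times q$ slices) is linearly independent (as a family of matrices). *)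

(* Defs.v *)
From HB Require Import structures.
From mathcomp Require Import all_boot all_order all_algebra.
Set Implicit Arguments. Unset Strict Implicit. Unset Printing Implicit Defensive.
Import Order.TTheory GRing.Theory Num.Theory.
Local Open Scope ring_scope.

Definition smat (F : fieldType) (m n q : nat) := 'I_m -> 'I_n -> 'I_q -> F.

Definition sm_equiv (F : fieldType) (m n q : nat) (A B : smat F m n q) : Prop :=
  exists (R : 'M[F]_m) (S : 'M[F]_n) (T : 'M[F]_q),
    [/\ R \in unitmx, S \in unitmx, T \in unitmx &
      forall i' j' k',
        B i' j' k' = \sum_(i < m) \sum_(j < n) \sum_(k < q)
                        A i j k * R i i' * S j j' * T k k'].

(* Linear independence of the three families of slices, written out. *)
Definition sm_regular (F : fieldType) (m n q : nat) (A : smat F m n q) : Prop :=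
  [/\
      (forall c : 'I_q -> F,
         (forall i j, \sum_(k < q) c k * A i j k = 0) -> forall k, c k = 0),
      (forall c : 'I_n -> F,
         (forall i k, \sum_(j < n) c j * A i j k = 0) -> forall j, c j = 0) &
      (forall c : 'I_m -> F,
         (forall j k, \sum_(i < m) c i * A i j k = 0) -> forall i, c i = 0)].

(* Names of the canonical spatial matrices: (1)-(7), A(v), B(v), and the
   extra 2x2x2 matrix D := || [1 0;0 0] | [0 0;0 1] || of the last clause. *)
Inductive canon (F : fieldType) : Type :=
| C1 | C2 | C3 | C4 | C5 | C6 | C7
| CA of F | CB of F | CD.

Arguments C1 {F}. Arguments C2 {F}. Arguments C3 {F}. Arguments C4 {F}.
Arguments C5 {F}. Arguments C6 {F}. Arguments C7 {F}. Arguments CD {F}.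

Definition cdims (F : fieldType) (c : canon F) : nat * nat * nat :=
  match c with
  | C1 => (1, 1, 1)%N
  | C2 => (2, 2, 1)%N
  | C3 => (2, 1, 2)%N
  | C4 => (1, 2, 2)%N
  | C5 => (3, 2, 2)%N
  | C6 => (3, 2, 2)%N
  | C7 => (4, 2, 2)%N
  | CA _ => (2, 2, 2)%N
  | CB _ => (2, 2, 2)%N
  | CD => (2, 2, 2)%N
  end.

Definition b2F (F : fieldType) (b : bool) : F := if b then 1 else 0.

(* entry a_{ijk} (0-based, i row, j column, k slice) *)
Definition centry (F : fieldType) (c : canon F) (i j k : nat) : F :=
  match c with
  | C1 => b2F F [&& i == 0, j == 0 & k == 0]%N
  | C2 => b2F F (i == j)%N
  | C3 => b2F F (i == k)%N
  | C4 => b2F F (j == k)%N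
  | C5 => if k == 0%N then b2F F (i == j)%N else b2F F ((i == 2) && (j == 1))%N
  | C6 => if k == 0%N then b2F F (i == j)%N else b2F F (i == j.+1)%N
  | C7 => if k == 0%N then b2F F (i == j)%N else b2F F (i == j.+2)%N
  | CA v => if k == 0%N then b2F F (i == j)%N
            else if ((i == 0) && (j == 1))%N then v
            else b2F F ((i == 1) && (j == 0))%N
  | CB v => if k == 0%N then b2F F (i == j)%N
            else if ((i == 0) && (j == 1))%N then v
            else b2F F (i == 1)%N
  | CD => if k == 0%N then b2F F ((i == 0) && (j == 0))%N
          else b2F F ((i == 1) && (j == 1))%N
  end.

Definition equiv_to (F : fieldType) (m n q : nat) (A : smat F m n q)
    (c : canon F) : Prop :=
  cdims c = (m, n, q) /\
  sm_equiv A (fun (i : 'I_m) (j : 'I_n) (k : 'I_q) => centry c i j k).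

Definition cequiv (F : fieldType) (c c' : canon F) : Prop :=
  let: (m, n, q) := cdims c in
  equiv_to (fun (i : 'I_m) (j : 'I_n) (k : 'I_q) => centry c i j k) c'.

Definition is_square (F : fieldType) (z : F) : Prop := exists a : F, z = a ^+ 2.

Definition in_list (F : fieldType) (c : canon F) : Prop :=
  match c with
  | CB _ => 2%N \in [pchar F]
  | CD => False
  | _ => True
  end.

Definition in_list_ac (F : fieldType) (c : canon F) : Prop :=
  match c with
  | CA v => v = 0
  | CB _ => False
  | _ => True
  end.

Definition exception (F : fieldType) (c c' : canon F) : Prop :=
  match c, c' with
  | CA v, CA v' =>
      (~ (2%N \in [pchar F]) /\
         exists z, [/\ z != 0, is_square z & v' = v * z])
      \/
      (2%N \in [pchar F] /\
         exists al be ga de : F,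
           [/\ is_square al, is_square be, is_square ga & is_square de] /\
           [/\ al * de + be * ga != 0, ga * v + de != 0 &
                v' = (al * v + be) / (ga * v + de)])
  | CB v, CB v' =>
      2%N \in [pchar F] /\ exists be : F, v' = v + be + be ^+ 2
  | _, _ => False
  end.

(* Main.v *)
Require Import Defs.
From HB Require Import structures.
From mathcomp Require Import all_boot all_order all_algebra.
From mathcomp Require Import ring.
Set Implicit Arguments. Unset Strict Implicit. Unset Printing Implicit Defensive.
Import GRing.Theory.
Local Open Scope ring_scope.

Ltac simp_sum := rewrite ?big_ord_recl ?big_ord0 /= ?mulr0 ?mulr1 ?addr0 ?add0r.
Ltac from h := apply: (etrans _ (etrans h _)); ring.


Section Basic.
Variable F : fieldType.

Definition sl m n q (A : smat F m n q) (k : 'I_q) : 'M[F]_(m,n) :=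
  \matrix_(i, j) A i j k.

Lemma sl_entry m n q (A : smat F m n q) (R : 'M[F]_m) (S : 'M[F]_n) (T : 'M[F]_q) k' i' j' :
  (R^T *m (\sum_k T k k' *: sl A k) *m S) i' j' =
  \sum_(i < m) \sum_(j < n) \sum_(k < q) A i j k * R i i' * S j j' * T k k'.
Proof.
rewrite mxE.
under eq_bigr => j _ do rewrite mxE mulr_suml.
rewrite exchange_big /=; apply: eq_bigr => i _.
apply: eq_bigr => j _.
rewrite !mxE summxE mulr_sumr mulr_suml; apply: eq_bigr => k _.
by rewrite !mxE; ring.
Qed.

Lemma equiv_of_slices m n q (A B : smat F m n q) R S T :
  R \in unitmx -> S \in unitmx -> T \in unitmx ->
  (forall k', sl B k' = R^T *m (\sum_k T k k' *: sl A k) *m S) -> sm_equiv A B.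
Proof.
move=> uR uS uT H; exists R, S, T; split => // i' j' k'.
by rewrite -sl_entry -H mxE.
Qed.

Lemma slices_of_equiv m n q (A B : smat F m n q) : sm_equiv A B ->
  exists R S T, [/\ R \in unitmx, S \in unitmx, T \in unitmx &
  (forall k', sl B k' = R^T *m (\sum_k T k k' *: sl A k) *m S)].
Proof.
move=> [R [S [T [uR uS uT H]]]]; exists R, S, T; split => // k'.
by apply/matrixP => i' j'; rewrite sl_entry mxE H.
Qed.

Lemma slice_ext m n q (A B : smat F m n q) : (forall k, sl A k = sl B k) ->
  forall i j k, A i j k = B i j k.
Proof. by move=> H i j k; move/matrixP: (H k) => /(_ i j); rewrite !mxE. Qed.

Lemma sm_equiv_refl m n q (A : smat F m n q) : sm_equiv A A.
Proof.
apply: (@equiv_of_slices _ _ _ _ _ 1%:M 1%:M 1%:M); rewrite ?unitmx1 // => k'.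
rewrite trmx1 mul1mx mulmx1 (bigD1 k') //= big1 ?addr0.
  by rewrite mxE eqxx scale1r.
by move=> k /negPf nk; rewrite mxE nk scale0r.
Qed.

Lemma slice_comp m n q (A : smat F m n q) (R1 R2 : 'M[F]_m) (S1 S2 : 'M[F]_n) (T1 T2 : 'M[F]_q) (k'' : 'I_q) :
  R2^T *m (\sum_k' T2 k' k'' *: (R1^T *m (\sum_k T1 k k' *: sl A k) *m S1)) *m S2 =
  (R1 *m R2)^T *m (\sum_k (T1 *m T2) k k'' *: sl A k) *m (S1 *m S2).
Proof.
have E1 : \sum_k' T2 k' k'' *: (R1^T *m (\sum_k T1 k k' *: sl A k) *m S1) =
  R1^T *m (\sum_k' T2 k' k'' *: (\sum_k T1 k k' *: sl A k)) *m S1.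
  rewrite mulmx_sumr mulmx_suml; apply: eq_bigr => k' _.
  by rewrite -scalemxAr -scalemxAl.
have E2 : \sum_k' T2 k' k'' *: (\sum_k T1 k k' *: sl A k) =
  \sum_k (T1 *m T2) k k'' *: sl A k.
  under eq_bigr => k' _ do rewrite scaler_sumr.
  rewrite exchange_big /=; apply: eq_bigr => k _.
  rewrite mxE scaler_suml; apply: eq_bigr => k' _.
  by rewrite scalerA mulrC.
by rewrite E1 E2 trmx_mul !mulmxA.
Qed.

Lemma sm_equiv_trans m n q (A B C : smat F m n q) :
  sm_equiv A B -> sm_equiv B C -> sm_equiv A C.
Proof.
move=> /slices_of_equiv [R1 [S1 [T1 [u1 v1 w1 H1]]]].
move=> /slices_of_equiv [R2 [S2 [T2 [u2 v2 w2 H2]]]].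
apply: (@equiv_of_slices _ _ _ _ _ (R1 *m R2) (S1 *m S2) (T1 *m T2));
  rewrite ?unitmx_mul ?u1 ?u2 ?v1 ?v2 ?w1 ?w2 // => k''.
rewrite H2 -slice_comp; congr (_ *m _ *m _); apply: eq_bigr => k' _.
by rewrite H1.
Qed.

Lemma sm_equiv_sym m n q (A B : smat F m n q) : sm_equiv A B -> sm_equiv B A.
Proof.
move=> /slices_of_equiv [R [S [T [uR uS uT H]]]].
apply: (@equiv_of_slices _ _ _ _ _ (invmx R) (invmx S) (invmx T));
  rewrite ?unitmx_inv // => k.
have E := slice_comp A R (invmx R) S (invmx S) T (invmx T) k.
rewrite (mulmxV uR) (mulmxV uS) (mulmxV uT) trmx1 mul1mx mulmx1 in E.
rewrite (_ : \sum_k0 (1%:M : 'M_q) k0 k *: sl A k0 = sl A k) in E; last first.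
  rewrite (bigD1 k) //= big1 ?addr0; first by rewrite mxE eqxx scale1r.
  by move=> k0 /negPf nk; rewrite mxE nk scale0r.
rewrite -E; congr (_ *m _ *m _); apply: eq_bigr => k' _.
by rewrite H.
Qed.

End Basic.


Section Two.
Variable F : fieldType.

Lemma ord2P (i : 'I_2) : i = 0 \/ i = 1.
Proof. by case: i => [[|[|//]] Hi]; [left|right]; apply/val_inj. Qed.

Lemma sum2 (V : nmodType) (f : 'I_2 -> V) : \sum_i f i = f 0 + f 1.
Proof. by rewrite !big_ord_recl big_ord0 addr0; congr (f _ + f _); apply/val_inj. Qed.

Lemma mx2P (A B : 'M[F]_2) : A 0 0 = B 0 0 -> A 0 1 = B 0 1 ->
  A 1 0 = B 1 0 -> A 1 1 = B 1 1 -> A = B.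
Proof.
move=> h1 h2 h3 h4; apply/matrixP => i j.
by case: (ord2P i) => ->; case: (ord2P j) => ->.
Qed.

Lemma mul2E (A B : 'M[F]_2) i j : (A *m B) i j = A i 0 * B 0 j + A i 1 * B 1 j.
Proof. by rewrite mxE sum2. Qed.

Lemma det2 (A : 'M[F]_2) : \det A = A 0 0 * A 1 1 - A 0 1 * A 1 0.
Proof.
rewrite (expand_det_row A 0) sum2 /cofactor !det_mx11 !mxE /=.
rewrite expr0 expr1 mul1r mulN1r; congr (_ + _).
  by congr (_ * _); congr (A _ _); apply/val_inj.
by rewrite mulrN; congr (- (_ * _)); congr (A _ _); apply/val_inj.
Qed.

Definition mk2 (a b c d : F) : 'M[F]_2 :=
  \matrix_(i, j) if i == 0 then (if j == 0 then a else b)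
                 else (if j == 0 then c else d).

Lemma mk2E a b c d : [/\ mk2 a b c d 0 0 = a, mk2 a b c d 0 1 = b,
  mk2 a b c d 1 0 = c & mk2 a b c d 1 1 = d].
Proof. by rewrite !mxE. Qed.


Definition tr2 (N : 'M[F]_2) := N 0 0 + N 1 1.
Definition comp2 (N : 'M[F]_2) := mk2 0 (- \det N) 1 (tr2 N).
Definition cyc (N : 'M[F]_2) (u0 u1 : F) :=
  mk2 u0 (N 0 0 * u0 + N 0 1 * u1) u1 (N 1 0 * u0 + N 1 1 * u1).

Lemma cyc_comp N u0 u1 : N *m cyc N u0 u1 = cyc N u0 u1 *m comp2 N.
Proof. by apply: mx2P; rewrite /comp2 det2 /tr2 !mul2E !mxE /=; ring. Qed.

Lemma det_cyc N u0 u1 : \det (cyc N u0 u1) =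
  u0 * (N 1 0 * u0 + N 1 1 * u1) - (N 0 0 * u0 + N 0 1 * u1) * u1.
Proof. by rewrite det2 !mxE. Qed.

Lemma unit2 (A : 'M[F]_2) : (A \in unitmx) = (\det A != 0).
Proof. by rewrite unitmxE unitfE. Qed.

Lemma core (A B : smat F 2 2 2) (a b c d : F) (P0 : 'M[F]_2) :
  a * d - b * c != 0 ->
  (a *: sl A 0 + b *: sl A 1) \in unitmx -> P0 \in unitmx ->
  sl B 0 = 1%:M ->
  (c *: sl A 0 + d *: sl A 1) *m P0 = (a *: sl A 0 + b *: sl A 1) *m P0 *m sl B 1 ->
  sm_equiv A B.
Proof.
set X := a *: sl A 0 + _; set Y := c *: sl A 0 + _ => hdet uX uP hB0 hY.
have uXP : X *m P0 \in unitmx by rewrite unitmx_mul uX uP.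
apply: (@equiv_of_slices _ _ _ _ A B (invmx (X *m P0))^T P0 (mk2 a c b d)).
- by rewrite unitmx_tr unitmx_inv.
- exact: uP.
- by rewrite unit2 det2 !mxE /= (mulrC c b).
move=> k'; rewrite trmxK sum2 !mxE /=; case: (ord2P k') => -> /=.
  by rewrite hB0 -/X -mulmxA mulVmx.
by rewrite -/Y -mulmxA hY mulKmx.
Qed.

End Two.


Section Reg.
Variable F : fieldType.

Lemma reg1 m n q (A : smat F m n q) : sm_regular A ->
  forall r : 'rV_m, (forall k, r *m sl A k = 0) -> r = 0.
Proof.
case=> _ _ h r H; apply/rowP => i; rewrite mxE.
apply: (h (fun i => r 0 i)) => j k.
move/matrixP: (H k) => /(_ 0 j); rewrite !mxE => E; apply: (etrans _ E).
by apply: eq_bigr => i' _; rewrite mxE.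
Qed.

Lemma reg2 m n q (A : smat F m n q) : sm_regular A ->
  forall u : 'cV_n, (forall k, sl A k *m u = 0) -> u = 0.
Proof.
case=> _ h _ u H; apply/colP => j; rewrite mxE.
apply: (h (fun j => u j 0)) => i k.
move/matrixP: (H k) => /(_ i 0); rewrite !mxE => E; apply: (etrans _ E).
by apply: eq_bigr => j' _; rewrite mxE mulrC.
Qed.

Lemma reg3 m n q (A : smat F m n q) : sm_regular A ->
  forall c : 'I_q -> F, \sum_k c k *: sl A k = 0 -> forall k, c k = 0.
Proof.
case=> h _ _ c H; apply: h => i j.
move/matrixP: H => /(_ i j); rewrite !mxE summxE => E; apply: (etrans _ E).
by apply: eq_bigr => k _; rewrite !mxE.
Qed.

Definition e1c : 'cV[F]_2 := \col_i (i == 1)%:R.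
Definition e1r : 'rV[F]_2 := \row_i (i == 1)%:R.

Lemma mul_e1c (M : 'M[F]_2) : M 0 1 = 0 -> M 1 1 = 0 -> M *m e1c = 0.
Proof.
move=> h1 h2; apply/matrixP => i j; rewrite mxE sum2 !mxE /=.
by case: (ord2P i) => ->; rewrite ?h1 ?h2 /=; ring.
Qed.

Lemma mul_e1r (M : 'M[F]_2) : M 1 0 = 0 -> M 1 1 = 0 -> e1r *m M = 0.
Proof.
move=> h1 h2; apply/matrixP => i j; rewrite mxE sum2 !mxE /=.
by case: (ord2P j) => ->; rewrite ?h1 ?h2 /=; ring.
Qed.

Lemma singular_pencil (A : smat F 2 2 2) : sm_regular A ->
  \det (sl A 0) = 0 -> \det (sl A 1) = 0 -> \det (sl A 0 + sl A 1) = 0 -> False.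
Proof.
move=> reg d0 d1 d01.
set A0 := sl A 0 in d0 d01; set A1 := sl A 1 in d1 d01.
have [A00|A0n0] := eqVneq A0 0.
  have := reg3 reg (c := fun k => if k == 0 then 1 else 0).
  rewrite sum2 /= scale1r scale0r addr0 -/A0 A00 => /(_ erefl 0) /=.
  by move/eqP; rewrite oner_eq0.
have r1 : \rank A0 = 1%N.
  have h2 := rank_leq_row A0.
  have h0 : \rank A0 != 0%N by rewrite mxrank_eq0.
  have hn2 : \rank A0 != 2%N.
    apply/negP => /eqP h; move: d0 => /eqP; apply/negP.
    by rewrite -unit2 -row_free_unit /row_free h.
  by move: h2 h0 hn2; case: (\rank A0) => [|[|[|]]].
set L := col_ebase A0; set U := row_ebase A0.
have uL : L \in unitmx by apply: col_ebase_unit.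
have uU : U \in unitmx by apply: row_ebase_unit.
have eA0 : A0 = L *m pid_mx 1 *m U by have := mulmx_ebase A0; rewrite r1 => ->.
have [A1' eA1] : exists A1', A1 = L *m A1' *m U.
  by exists (invmx L *m A1 *m invmx U); rewrite !mulmxA mulmxV // mul1mx mulmxKV.
have dL : \det L != 0 by rewrite -unit2.
have dU : \det U != 0 by rewrite -unit2.
have dA1' : \det A1' = 0.
  move: d1; rewrite eA1 !det_mulmx => /eqP.
  by rewrite !mulf_eq0 (negPf dL) (negPf dU) /= ?orbF => /eqP.
have dA01' : \det (pid_mx 1 + A1') = 0.
  move: d01; rewrite eA0 eA1 -mulmxDl -mulmxDr !det_mulmx => /eqP.
  by rewrite !mulf_eq0 (negPf dL) (negPf dU) /= ?orbF => /eqP.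
move: dA1' dA01'; rewrite !det2 !mxE /=.
set x := A1' 0 0; set y := A1' 0 1; set z := A1' 1 0; set w := A1' 1 1.
move=> h1 h2.
have w0 : w = 0.
  have -> : w = (1 + x) * (0 + w) - (0 + y) * (0 + z) - (x * w - y * z) by ring.
  by rewrite h1 h2 subrr.
have : y * z = 0.
  have -> : y * z = x * w - (x * w - y * z) by ring.
  by rewrite h1 w0 mulr0 subrr.
move/eqP; rewrite mulf_eq0 => /orP[/eqP y0|/eqP z0].
- have hu : invmx U *m e1c = 0.
    apply: (reg2 reg) => k; case: (ord2P k) => ->.
      rewrite -/A0 eA0 -!mulmxA mulKVmx //.
      by rewrite mul_e1c ?mulmx0 // !mxE.
    rewrite -/A1 eA1 -!mulmxA mulKVmx //.
    by rewrite mul_e1c ?mulmx0 //.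
  move/(congr1 (mulmx U)): hu; rewrite mulKVmx // mulmx0 => /matrixP /(_ 1 0).
  by rewrite !mxE /= => /eqP; rewrite oner_eq0.
- have hr : e1r *m invmx L = 0.
    apply: (reg1 reg) => k; case: (ord2P k) => ->.
      rewrite -/A0 eA0 !mulmxA mulmxKV //.
      by rewrite mul_e1r ?mul0mx // !mxE.
    rewrite -/A1 eA1 !mulmxA mulmxKV //.
    by rewrite mul_e1r ?mul0mx //.
  move/(congr1 (mulmx^~ L)): hr; rewrite mulmxKV // mul0mx => /matrixP /(_ 0 1).
  by rewrite !mxE /= => /eqP; rewrite oner_eq0.
Qed.

End Reg.


Section Pencil.
Variable F : fieldType.

Definition cm (c : canon F) m n q : smat F m n q :=
  fun (i : 'I_m) (j : 'I_n) (k : 'I_q) => centry c i j k.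
Arguments cm : clear implicits.

Lemma slCA0 v : sl (cm (CA v) 2 2 2) 0 = 1%:M.
Proof. by apply: mx2P; rewrite !mxE. Qed.
Lemma slCA1 v : sl (cm (CA v) 2 2 2) 1 = mk2 0 v 1 0.
Proof. by apply: mx2P; rewrite !mxE. Qed.
Lemma slCB0 v : sl (cm (CB v) 2 2 2) 0 = 1%:M.
Proof. by apply: mx2P; rewrite !mxE. Qed.
Lemma slCB1 v : sl (cm (CB v) 2 2 2) 1 = mk2 0 v 1 1.
Proof. by apply: mx2P; rewrite !mxE. Qed.
Lemma slCD0 : sl (cm CD 2 2 2) 0 = mk2 1 0 0 0.
Proof. by apply: mx2P; rewrite !mxE. Qed.
Lemma slCD1 : sl (cm CD 2 2 2) 1 = mk2 0 0 0 1.
Proof. by apply: mx2P; rewrite !mxE. Qed.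

Lemma exists_unit_comb (A : smat F 2 2 2) : sm_regular A ->
  exists a b c d : F, a * d - b * c != 0 /\ (a *: sl A 0 + b *: sl A 1) \in unitmx.
Proof.
move=> reg.
have [d0|d0] := eqVneq (\det (sl A 0)) 0; last first.
  by exists 1, 0, 0, 1; rewrite scale1r scale0r addr0 unit2 d0; split => //; rewrite mulr1 mul0r subr0 oner_eq0.
have [d1|d1] := eqVneq (\det (sl A 1)) 0; last first.
  exists 0, 1, 1, 0; rewrite scale1r scale0r add0r unit2 d1; split => //.
  by rewrite mul0r mulr1 sub0r oppr_eq0 oner_eq0.
have [d2|d2] := eqVneq (\det (sl A 0 + sl A 1)) 0.
  by case: (singular_pencil reg d0 d1 d2).
exists 1, 1, 0, 1; rewrite !scale1r unit2 d2; split => //.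
by rewrite mulr1 mulr0 subr0 oner_eq0.
Qed.

Lemma cyc_exists (N : 'M[F]_2) : ~~ [&& N 0 1 == 0, N 1 0 == 0 & N 0 0 == N 1 1] ->
  exists u0 u1, cyc N u0 u1 \in unitmx.
Proof.
move=> H.
have [h10|h10] := eqVneq (N 1 0) 0; last first.
  exists 1, 0; rewrite unit2 det_cyc.
  by have -> : 1 * (N 1 0 * 1 + N 1 1 * 0) - (N 0 0 * 1 + N 0 1 * 0) * 0 = N 1 0 by ring.
have [h01|h01] := eqVneq (N 0 1) 0; last first.
  exists 0, 1; rewrite unit2 det_cyc.
  have -> : 0 * (N 1 0 * 0 + N 1 1 * 1) - (N 0 0 * 0 + N 0 1 * 1) * 1 = - N 0 1 by ring.
  by rewrite oppr_eq0.
exists 1, 1; rewrite unit2 det_cyc h10 h01.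
have -> : 1 * (0 * 1 + N 1 1 * 1) - (N 0 0 * 1 + 0 * 1) * 1 = N 1 1 - N 0 0 by ring.
by rewrite subr_eq0 eq_sym; move: H; rewrite h10 h01 !eqxx.
Qed.

Lemma pencil_canon (A B : smat F 2 2 2) a b c d : sm_regular A -> a * d - b * c != 0 ->
  (a *: sl A 0 + b *: sl A 1) \in unitmx -> sl B 0 = 1%:M ->
  sl B 1 = comp2 (invmx (a *: sl A 0 + b *: sl A 1) *m (c *: sl A 0 + d *: sl A 1)) ->
  sm_equiv A B.
Proof.
set X := a *: sl A 0 + _; set Y := c *: sl A 0 + _; set M2 := invmx X *m Y.
move=> reg hdet uX hB0 hB1.
have eY : Y = X *m M2 by rewrite /M2 mulKVmx.
have nsc : ~~ [&& M2 0 1 == 0, M2 1 0 == 0 & M2 0 0 == M2 1 1].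
  apply/negP => /and3P [/eqP h01 /eqP h10 /eqP h00].
  set s := M2 0 0.
  have eM : M2 = s%:M.
    by apply: mx2P; rewrite [RHS]mxE /= ?mulr1n ?mulr0n.
  have eY' : Y = s *: X by rewrite eY eM mul_mx_scalar.
  have := reg3 reg (c := fun k => if k == 0 then c - s * a else d - s * b).
  rewrite sum2 /=.
  have -> : (c - s * a) *: sl A 0 + (d - s * b) *: sl A 1 = Y - s *: X.
    by apply/matrixP => i j; rewrite !mxE; ring.
  rewrite eY' subrr => /(_ erefl) h.
  move: hdet; have -> : a * d - b * c = a * (d - s * b) - b * (c - s * a) by ring.
  have h0 := h 0; have h1 := h 1; rewrite /= in h0 h1.
  by rewrite h0 h1 !mulr0 subrr eqxx.
have [u0 [u1 uP]] := cyc_exists nsc.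
apply: (@core _ A B a b c d (cyc M2 u0 u1)) => //.
rewrite -/Y eY hB1 -!mulmxA; congr (_ *m _); rewrite mulmxA; exact: cyc_comp.
Qed.

Lemma comb_lin (A : smat F 2 2 2) a b c d al be :
  (a *: sl A 0 + b *: sl A 1) \in unitmx ->
  invmx (a *: sl A 0 + b *: sl A 1) *m ((al * c + be * a) *: sl A 0 + (al * d + be * b) *: sl A 1)
  = al *: (invmx (a *: sl A 0 + b *: sl A 1) *m (c *: sl A 0 + d *: sl A 1)) + be%:M.
Proof.
set X := a *: sl A 0 + _ => uX.
have -> : (al * c + be * a) *: sl A 0 + (al * d + be * b) *: sl A 1 =
  al *: (c *: sl A 0 + d *: sl A 1) + be *: X.
  by apply/matrixP => i j; rewrite !mxE; ring.
by rewrite mulmxDr -!scalemxAr mulVmx // scalemx1.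
Qed.

Lemma tr2_lin (M : 'M[F]_2) al be : tr2 (al *: M + be%:M) = al * tr2 M + be + be.
Proof. by rewrite /tr2 !mxE /=; ring. Qed.

Lemma char2E : (2%N \in [pchar F]) = ((2%:R : F) == 0).
Proof. by rewrite inE. Qed.

Lemma exist222 (A : smat F 2 2 2) : sm_regular A ->
  exists c, in_list c /\ cdims c = (2, 2, 2)%N /\ sm_equiv A (cm c 2 2 2).
Proof.
move=> reg; have [a [b [c' [d' [hdet uX]]]]] := exists_unit_comb reg.
set X := a *: sl A 0 + _ in uX.
set Mc := invmx X *m (c' *: sl A 0 + d' *: sl A 1).
set tau := tr2 Mc.
have key : forall al be, al != 0 -> forall B : smat F 2 2 2, sl B 0 = 1%:M ->
    sl B 1 = comp2 (al *: Mc + be%:M) -> sm_equiv A B.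
  move=> al be hal B hB0 hB1.
  apply: (@pencil_canon A B a b (al * c' + be * a) (al * d' + be * b) reg) => //.
    have -> : a * (al * d' + be * b) - b * (al * c' + be * a) = al * (a * d' - b * c') by ring.
    by rewrite mulf_neq0.
  by rewrite -/X comb_lin.
have [ch2|nch2] := boolP (2%N \in [pchar F]).
  have two0 : (2%:R : F) = 0 by apply/eqP; rewrite -char2E.
  have [t0|t0] := eqVneq tau 0.
    exists (CA (- \det (1 *: Mc + 0%:M))); split => //; split => //.
    apply: (key 1 0); rewrite ?oner_eq0 ?slCA0 ?slCA1 //.
    by rewrite /comp2 tr2_lin -/tau t0 mulr0 !add0r.
  exists (CB (- \det (tau^-1 *: Mc + 0%:M))); split => //; split => //.
  apply: (key tau^-1 0); rewrite ?invr_eq0 ?slCB0 ?slCB1 //.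
  by rewrite /comp2 tr2_lin -/tau mulVf // !addr0.
have two0 : (2%:R : F) != 0 by rewrite -char2E.
exists (CA (- \det (1 *: Mc + (- tau / 2%:R)%:M))); split => //; split => //.
apply: (key 1 (- tau / 2%:R)); rewrite ?oner_eq0 ?slCA0 ?slCA1 //.
rewrite /comp2 tr2_lin -/tau; congr mk2.
by field.
Qed.

End Pencil.
Arguments cm {F} c m n q.


Section Mode1.
Variable F : fieldType.

Definition sl1 m n q (A : smat F m n q) (i : 'I_m) : 'M[F]_(n, q) :=
  \matrix_(j, k) A i j k.

Definition Zm m n q (A : smat F m n q) : 'M[F]_(m, n * q) :=
  \matrix_(i, l) mxvec (sl1 A i) 0 l.

Lemma ZmE m n q (A : smat F m n q) i j k : Zm A i (mxvec_index j k) = A i j k.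
Proof. by rewrite mxE mxvecE mxE. Qed.

Lemma sum_mxvec n q (f : 'I_(n * q) -> F) :
  \sum_l f l = \sum_j \sum_k f (mxvec_index j k).
Proof.
rewrite (reindex _ (curry_mxvec_bij _ _)) /= pair_bigA.
by apply: eq_bigr => -[j k].
Qed.

Definition stA m n q (S : 'M[F]_n) (T : 'M[F]_q) (A : smat F m n q) : smat F m n q :=
  fun i j k => (S^T *m sl1 A i *m T) j k.

Lemma stAE m n q (S : 'M[F]_n) (T : 'M[F]_q) (A : smat F m n q) i j' k' :
  stA S T A i j' k' = \sum_j \sum_k A i j k * S j j' * T k k'.
Proof.
rewrite /stA mxE.
under eq_bigr => k _ do rewrite mxE mulr_suml.
rewrite exchange_big /=; apply: eq_bigr => j _; apply: eq_bigr => k _.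
by rewrite !mxE; ring.
Qed.

Lemma ker_nz m n (M : 'M[F]_(m, n)) : ~~ row_free M ->
  exists2 v : 'rV_m, v != 0 & v *m M = 0.
Proof.
by rewrite -kermx_eq0 => /rowV0Pn [v vK vn0]; exists v => //; apply/sub_kermxP.
Qed.

Lemma equiv_of_sub m n q (A B : smat F m n q) S T :
  S \in unitmx -> T \in unitmx ->
  (Zm B <= Zm (stA S T A))%MS -> row_free (Zm B) -> sm_equiv A B.
Proof.
move=> uS uT /submxP [D eD] rf.
have uD : D \in unitmx.
  rewrite -row_free_unit /row_free eqn_leq rank_leq_row /=.
  move: rf; rewrite /row_free eD => /eqP hr.
  by rewrite -[X in (X <= _)%N]hr; apply: mxrankM_maxl.
exists D^T, S, T; split; rewrite ?unitmx_tr // => i' j' k'.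
rewrite -ZmE eD mxE; apply: eq_bigr => i _.
rewrite ZmE stAE mulr_sumr; apply: eq_bigr => j _.
rewrite mulr_sumr; apply: eq_bigr => k _.
by rewrite mxE; ring.
Qed.

Lemma reg_rowfree m n q (A : smat F m n q) : sm_regular A -> row_free (Zm A).
Proof.
move=> reg; apply: inj_row_free => v hv; apply: (reg1 reg) => k.
apply/rowP => j; rewrite !mxE.
move/rowP: hv => /(_ (mxvec_index j k)); rewrite !mxE => E; apply: (etrans _ E).
by apply: eq_bigr => i _; rewrite ZmE mxE.
Qed.

Lemma regular_bound m n q (A : smat F m n q) : sm_regular A -> (m <= n * q)%N.
Proof.
move=> /reg_rowfree; rewrite /row_free => /eqP <-; exact: rank_leq_col.
Qed.

Lemma stA_reg m n q (A : smat F m n q) S T : S \in unitmx -> T \in unitmx ->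
  row_free (Zm A) -> row_free (Zm (stA S T A)).
Proof.
move=> uS uT rf; apply: inj_row_free => v hv.
apply: (row_free_inj rf); rewrite mul0mx.
have E : forall j k, \sum_i v 0 i * A i j k = 0.
  have E1 : \sum_i v 0 i *: (S^T *m sl1 A i *m T) = 0.
    apply/matrixP => j' k'; rewrite summxE [RHS]mxE.
    move/rowP: hv => /(_ (mxvec_index j' k')); rewrite mxE [RHS]mxE => E; apply: (etrans _ E).
    by apply: eq_bigr => i _; rewrite ZmE /stA [LHS]mxE.
  have E2 : S^T *m (\sum_i v 0 i *: sl1 A i) *m T = 0.
    rewrite mulmx_sumr mulmx_suml; apply: (etrans _ E1); apply: eq_bigr => i _.
    by rewrite -scalemxAr -scalemxAl.
  have E3 : \sum_i v 0 i *: sl1 A i = 0.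
    move: E2 => /(congr1 (mulmx^~ (invmx T))); rewrite mulmxK // mul0mx.
    move/(congr1 (mulmx (invmx S^T))); rewrite mulKmx ?unitmx_tr // mulmx0.
    done.
  move=> j k; move/matrixP: E3 => /(_ j k); rewrite summxE !mxE => E; apply: (etrans _ E).
  by apply: eq_bigr => i _; rewrite !mxE.
apply/rowP => l; case/mxvec_indexP: l => j k; rewrite mxE [RHS]mxE.
apply: (etrans _ (E j k)).
by apply: eq_bigr => i _; rewrite ZmE.
Qed.

End Mode1.



Section Cases.
Variable F : fieldType.

Lemma ord2P' (i : 'I_2) : i = ord0 \/ i = lift ord0 ord0.
Proof. by case: i => [[|[|//]] Hi]; [left|right]; apply/val_inj. Qed.

Lemma ord3P (i : 'I_3) : [\/ i = ord0, i = lift ord0 ord0 | i = lift ord0 (lift ord0 ord0)].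
Proof. by case: i => [[|[|[|//]]] Hi]; [constructor 1|constructor 2|constructor 3]; apply/val_inj. Qed.

Lemma ord4P (i : 'I_4) : [\/ i = ord0, i = lift ord0 ord0, i = lift ord0 (lift ord0 ord0) |
  i = lift ord0 (lift ord0 (lift ord0 ord0))].
Proof. by case: i => [[|[|[|[|//]]]] Hi]; [constructor 1|constructor 2|constructor 3|constructor 4]; apply/val_inj. Qed.

Lemma mode1_rf m n q (B : smat F m n q) :
  (forall v : 'rV_m, (forall j k, \sum_i v 0 i * B i j k = 0) -> v = 0) -> row_free (Zm B).
Proof.
move=> H; apply: inj_row_free => v hv; apply: H => j k.
move/rowP: hv => /(_ (mxvec_index j k)); rewrite mxE [RHS]mxE => E; apply: (etrans _ E).
by apply: eq_bigr => i _; rewrite ZmE.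
Qed.

Lemma full_equiv m n q (A B : smat F m n q) : m = (n * q)%N -> sm_regular A ->
  row_free (Zm B) -> sm_equiv A B.
Proof.
move=> hm reg rf; apply: (@equiv_of_sub _ _ _ _ A B 1%:M 1%:M); rewrite ?unitmx1 //.
apply: submx_full; have := stA_reg (unitmx1 _ _) (unitmx1 _ _) (reg_rowfree reg).
by rewrite /row_free /row_full => /eqP ->; rewrite hm.
Qed.

Lemma rf_C1 : row_free (Zm (cm (F:=F) C1 1 1 1)).
Proof.
apply: mode1_rf => v H; have := H 0 0; simp_sum => h.
by apply/rowP => i; rewrite (ord1 i) mxE.
Qed.

Lemma rf_C2 : row_free (Zm (cm (F:=F) C2 2 2 1)).
Proof.
apply: mode1_rf => v H; have := H 0 0; have := H 1 0; simp_sum => h1 h0.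
by apply/rowP => i; rewrite mxE; case: (ord2P' i) => ->.
Qed.

Lemma rf_C3 : row_free (Zm (cm (F:=F) C3 2 1 2)).
Proof.
apply: mode1_rf => v H; have := H 0 0; have := H 0 1; simp_sum => h1 h0.
by apply/rowP => i; rewrite mxE; case: (ord2P' i) => ->.
Qed.

Lemma rf_C4 : row_free (Zm (cm (F:=F) C4 1 2 2)).
Proof.
apply: mode1_rf => v H; have := H 0 0; simp_sum => h.
by apply/rowP => i; rewrite (ord1 i) mxE.
Qed.

Lemma rf_C5 : row_free (Zm (cm (F:=F) C5 3 2 2)).
Proof.
apply: mode1_rf => v H; have := H 0 0; have := H 1 0; have := H 1 1; simp_sum => h2 h1 h0.
apply/rowP => i; rewrite mxE; case: (ord3P i) => ->; done.
Qed.

Lemma rf_C6 : row_free (Zm (cm (F:=F) C6 3 2 2)).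
Proof.
apply: mode1_rf => v H; have := H 0 0; have := H 1 0; have := H 1 1; simp_sum => h2 h1 h0.
apply/rowP => i; rewrite mxE; case: (ord3P i) => ->; done.
Qed.

Lemma rf_C7 : row_free (Zm (cm (F:=F) C7 4 2 2)).
Proof.
apply: mode1_rf => v H; have := H 0 0; have := H 1 0; have := H 0 1; have := H 1 1.
simp_sum => h3 h2 h1 h0.
apply/rowP => i; rewrite mxE; case: (ord4P i) => ->; done.
Qed.

End Cases.



Section Three.
Variable F : fieldType.

Lemma key322 (A B : smat F 3 2 2) (N S T NB : 'M[F]_2) :
  sm_regular A -> (forall i, \sum_j \sum_k A i j k * N j k = 0) ->
  S \in unitmx -> T \in unitmx -> S *m NB *m T^T = N -> NB != 0 ->
  row_free (Zm B) -> (forall i, \sum_j \sum_k B i j k * NB j k = 0) -> sm_equiv A B.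
Proof.
move=> reg hN uS uT hSNT NBn0 rfB hB.
apply: (equiv_of_sub uS uT) => //.
set col := (mxvec NB)^T.
have colE : forall (M : smat F 3 2 2) i, (Zm M *m col) i 0 = \sum_j \sum_k M i j k * NB j k.
  move=> M i; rewrite mxE sum_mxvec; apply: eq_bigr => j _; apply: eq_bigr => k _.
  by rewrite ZmE mxE mxvecE.
have hS : Zm (stA S T A) *m col = 0.
  apply/matrixP => i z; rewrite (ord1 z) colE [RHS]mxE.
  have := hN i; rewrite -hSNT => E; apply: (etrans _ E).
  rewrite !sum2 !stAE; repeat rewrite ?sum2 ?mxE.
  ring.
have hB' : Zm B *m col = 0.
  by apply/matrixP => i z; rewrite (ord1 z) colE [RHS]mxE.
have colnz : col != 0 by rewrite trmx_eq0 mxvec_eq0.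
have rcol : \rank col = 1%N.
  apply/eqP; rewrite eqn_leq rank_leq_col lt0n mxrank_eq0 colnz.
  done.
have rK : \rank (kermx col) = 3%N by rewrite mxrank_ker rcol.
have sS : (Zm (stA S T A) <= kermx col)%MS by apply/sub_kermxP.
have rS : \rank (Zm (stA S T A)) = 3%N.
  by apply/eqP; apply: stA_reg => //; apply: reg_rowfree.
have KS : (kermx col <= Zm (stA S T A))%MS by rewrite -(mxrank_leqif_sup sS).2 rS rK.
apply: submx_trans KS; exact/sub_kermxP.
Qed.

Lemma exist322 (A : smat F 3 2 2) : sm_regular A ->
  sm_equiv A (cm C5 3 2 2) \/ sm_equiv A (cm C6 3 2 2).
Proof.
move=> reg; have rfA := reg_rowfree reg.
have [w wn0 hw] : exists2 w : 'rV_(2 * 2), w != 0 & w *m (Zm A)^T = 0.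
  apply: ker_nz; rewrite /row_free mxrank_tr; apply/negP => /eqP h.
  by have := rank_leq_row (Zm A); rewrite h.
set N := vec_mx w.
have hN : forall i, \sum_j \sum_k A i j k * N j k = 0.
  move=> i; move/rowP: hw => /(_ i); rewrite mxE [RHS]mxE => E; apply: (etrans _ E).
  rewrite sum_mxvec; apply: eq_bigr => j _; apply: eq_bigr => k _.
  by rewrite /N mxE [X in _ = _ * X]mxE ZmE mulrC.
have Nn0 : N != 0 by rewrite vec_mx_eq0.
have [dN|dN] := eqVneq (\det N) 0.
- left.
  have r1 : \rank N = 1%N.
    have h2 := rank_leq_row N.
    have h0 : \rank N != 0%N by rewrite mxrank_eq0.
    have hn2 : \rank N != 2%N.
      apply/negP => /eqP h; move: dN => /eqP; apply/negP.
      by rewrite -unit2 -row_free_unit /row_free h.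
    by move: h2 h0 hn2; case: (\rank N) => [|[|[|]]].
  set L := col_ebase N; set U := row_ebase N.
  have eN : N = L *m pid_mx 1 *m U by have := mulmx_ebase N; rewrite r1 => ->.
  apply: (@key322 A _ N L (mk2 0 1 1 0 *m U)^T (mk2 0 1 0 0)) => //.
  + exact: col_ebase_unit.
  + rewrite unitmx_tr unitmx_mul row_ebase_unit andbT unit2 det2 !mxE /=.
    by rewrite mul0r sub0r mulr1 oppr_eq0 oner_eq0.
  + rewrite trmxK eN !mulmxA; congr (_ *m _); rewrite -mulmxA; congr (_ *m _).
    by apply: mx2P; rewrite !mul2E !mxE /=; ring.
  + by apply/negP => /eqP /matrixP /(_ 0 1); rewrite !mxE /= => /eqP; rewrite oner_eq0.
  + exact: rf_C5.
  + by move=> i; case: (ord3P i) => ->; simp_sum; rewrite !mxE /=; ring.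
- right.
  apply: (@key322 A _ N (N *m mk2 0 (-1) 1 0) 1%:M (mk2 0 1 (-1) 0)) => //.
  + have d : \det (mk2 0 (-1) 1 0 : 'M[F]_2) = 1 by rewrite det2 !mxE /=; ring.
    by rewrite unitmx_mul !unit2 dN d oner_eq0.
  + exact: unitmx1.
  + rewrite trmx1 mulmx1 -mulmxA.
    have -> : mk2 0 (-1) 1 0 *m mk2 0 1 (-1) 0 = 1%:M :> 'M[F]_2.
      by apply: mx2P; rewrite !mul2E !mxE /=; ring.
    by rewrite mulmx1.
  + by apply/negP => /eqP /matrixP /(_ 0 1); rewrite !mxE /= => /eqP; rewrite oner_eq0.
  + exact: rf_C6.
  + by move=> i; case: (ord3P i) => ->; simp_sum; rewrite !mxE /=; ring.
Qed.

End Three.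



Section Exist.
Variable F : fieldType.

Lemma exist122 (A : smat F 1 2 2) : sm_regular A -> sm_equiv A (cm C4 1 2 2).
Proof.
move=> [_ h2 _].
set X := sl1 A 0.
have uX : X \in unitmx.
  rewrite -row_free_unit; apply: inj_row_free => v hv; apply/rowP => j; rewrite mxE.
  apply: (h2 (fun j => v 0 j)) => i k; rewrite (ord1 i).
  move/rowP: hv => /(_ k); rewrite !mxE => E; apply: (etrans _ E).
  by apply: eq_bigr => j' _; rewrite mxE.
apply: (@equiv_of_sub _ _ _ _ A _ 1%:M (invmx X)); rewrite ?unitmx1 ?unitmx_inv //; last first.
  exact: rf_C4.
have -> : Zm (cm C4 1 2 2) = Zm (stA 1%:M (invmx X) A) :> 'M[F]_(1, 2 * 2).
  apply/matrixP => i l; case/mxvec_indexP: l => j k; rewrite !ZmE (ord1 i) /stA.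
  rewrite trmx1 mul1mx -/X mulmxV // mxE.
  by case: (ord2P' j) => ->; case: (ord2P' k) => ->.
exact: submx_refl.
Qed.

Lemma nonreg121 (A : smat F 1 2 1) : sm_regular A -> False.
Proof.
move=> [_ h2 _].
have [a0|a0] := eqVneq (A 0 ord0 0) 0.
  have := h2 (fun j => if j == ord0 then 1 else 0).
  have hh : forall i k, \sum_j (if j == ord0 then 1 else 0) * A i j k = 0.
    move=> i k; rewrite (ord1 i) (ord1 k); simp_sum.
    by rewrite mul0r addr0 mul1r.
  by move=> /(_ hh ord0) /=; move/eqP; rewrite oner_eq0.
have := h2 (fun j => if j == ord0 then A 0 (lift ord0 ord0) 0 else - A 0 ord0 0).
have hh : forall i k, \sum_j (if j == ord0 then A 0 (lift ord0 ord0) 0 else - A 0 ord0 0) * A i j k = 0.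
  by move=> i k; rewrite (ord1 i) (ord1 k); simp_sum; ring.
by move=> /(_ hh (lift ord0 ord0)) /=; move/eqP; rewrite oppr_eq0 (negPf a0).
Qed.

Lemma nonreg112 (A : smat F 1 1 2) : sm_regular A -> False.
Proof.
move=> [h3 _ _].
have [a0|a0] := eqVneq (A 0 0 ord0) 0.
  have := h3 (fun k => if k == ord0 then 1 else 0).
  have hh : forall i j, \sum_k (if k == ord0 then 1 else 0) * A i j k = 0.
    move=> i j; rewrite (ord1 i) (ord1 j); simp_sum.
    by rewrite mul0r addr0 mul1r.
  by move=> /(_ hh ord0) /=; move/eqP; rewrite oner_eq0.
have := h3 (fun k => if k == ord0 then A 0 0 (lift ord0 ord0) else - A 0 0 ord0).
have hh : forall i j, \sum_k (if k == ord0 then A 0 0 (lift ord0 ord0) else - A 0 0 ord0) * A i j k = 0.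
  by move=> i j; rewrite (ord1 i) (ord1 j); simp_sum; ring.
by move=> /(_ hh (lift ord0 ord0)) /=; move/eqP; rewrite oppr_eq0 (negPf a0).
Qed.

Theorem part1 (m n q : nat) (A : smat F m n q) :
  (0 < m)%N -> (0 < n)%N -> (0 < q)%N -> (n <= 2)%N -> (q <= 2)%N ->
  sm_regular A -> exists c : canon F, in_list c /\ equiv_to A c.
Proof.
move=> hm hn hq hn2 hq2 reg; have hb := regular_bound reg.
case: n A reg hn hn2 hb => [|[|[|n]]] // A reg _ _ hb;
case: q A reg hq hq2 hb => [|[|[|q]]] // A reg _ _ hb;
case: m A reg hm hb => [|[|[|[|[|m]]]]] // A reg _ hb.
- by exists C1; split => //; split => //; apply: full_equiv => //; exact: rf_C1.
- by case: (nonreg112 reg).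
- by exists C3; split => //; split => //; apply: full_equiv => //; exact: rf_C3.
- by case: (nonreg121 reg).
- by exists C2; split => //; split => //; apply: full_equiv => //; exact: rf_C2.
- by exists C4; split => //; split => //; apply: exist122.
- by have [c [hc [hd he]]] := exist222 reg; exists c.
- by case: (exist322 reg) => h; [exists C5 | exists C6].
- by exists C7; split => //; split => //; apply: full_equiv => //; exact: rf_C7.
Qed.

End Exist.



Section Inv.
Variable F : fieldType.

Lemma form_equiv (A B : smat F 2 2 2) : sm_equiv A B ->
  exists (D a b c d : F), [/\ D != 0, a * d - b * c != 0 &
   forall l u : F, \det (l *: sl B 0 + u *: sl B 1) =
     D * \det ((l * a + u * c) *: sl A 0 + (l * b + u * d) *: sl A 1)].
Proof.
move=> /slices_of_equiv [R [S [T [uR uS uT H]]]].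
exists (\det R * \det S), (T 0 0), (T 1 0), (T 0 1), (T 1 1); split.
- by rewrite mulf_neq0 // -unit2.
- by move: uT; rewrite unit2 det2 mulrC [T 0 1 * _]mulrC.
move=> l u; rewrite !H !sum2.
have -> : l *: (R^T *m (T 0 0 *: sl A 0 + T 1 0 *: sl A 1) *m S) +
          u *: (R^T *m (T 0 1 *: sl A 0 + T 1 1 *: sl A 1) *m S) =
   R^T *m ((l * T 0 0 + u * T 0 1) *: sl A 0 + (l * T 1 0 + u * T 1 1) *: sl A 1) *m S.
  by apply/matrixP => i j; repeat rewrite ?mxE ?sum2 /=; ring.
by rewrite !det_mulmx det_tr; ring.
Qed.

Lemma formCA (v x y : F) : \det (x *: sl (cm (CA v) 2 2 2) 0 + y *: sl (cm (CA v) 2 2 2) 1) =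
  x ^+ 2 - v * y ^+ 2.
Proof. by rewrite slCA0 slCA1 det2 !mxE /=; ring. Qed.

Lemma formCB (v x y : F) : \det (x *: sl (cm (CB v) 2 2 2) 0 + y *: sl (cm (CB v) 2 2 2) 1) =
  x ^+ 2 + x * y - v * y ^+ 2.
Proof. by rewrite slCB0 slCB1 det2 !mxE /=; ring. Qed.

Lemma formCD (x y : F) : \det (x *: sl (cm CD 2 2 2) 0 + y *: sl (cm CD 2 2 2) 1) = x * y.
Proof. by rewrite slCD0 slCD1 det2 !mxE /=; ring. Qed.

Lemma char2E' : (2%N \in [pchar F]) = ((2%:R : F) == 0).
Proof. by rewrite inE. Qed.

Lemma inv_AA (v v' : F) : sm_equiv (cm (CA v) 2 2 2) (cm (CA v') 2 2 2) ->
  exception (CA v) (CA v').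
Proof.
move=> /form_equiv [D [a [b [c [d [D0 dT H]]]]]].
have h10 := H 1 0; have h01 := H 0 1; have h11 := H 1 1.
rewrite !formCA in h10 h01 h11.
have e0 : 1 = D * (a ^+ 2 - v * b ^+ 2).
  by move: h10; rewrite !mul1r !mul0r !addr0 expr1n expr0n /= mulr0 subr0.
have e1 : - v' = D * (c ^+ 2 - v * d ^+ 2).
  by move: h01; rewrite !mul1r !mul0r !add0r expr1n expr0n /= sub0r mulr1.
have e2 : 2%:R * (D * (a * c - v * b * d)) = 0.
  have -> : 2%:R * (D * (a * c - v * b * d)) =
     D * ((1 * a + 1 * c) ^+ 2 - v * (1 * b + 1 * d) ^+ 2) -
     D * (a ^+ 2 - v * b ^+ 2) - D * (c ^+ 2 - v * d ^+ 2) by ring.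
  by rewrite -h11 -e0 -e1; ring.
have [ch2|nch2] := boolP (2%N \in [pchar F]); [right|left].
- have two0 : (2%:R : F) = 0 by apply/eqP; rewrite -char2E'.
  split => //; exists (d ^+ 2), (c ^+ 2), (b ^+ 2), (a ^+ 2); split.
    by rewrite /is_square; split; [exists d|exists c|exists b|exists a].
  have nz : a ^+ 2 - v * b ^+ 2 != 0.
    by apply/eqP => h; move: e0; rewrite h mulr0 => /eqP; rewrite oner_eq0.
  have E1 : b ^+ 2 * v + a ^+ 2 = a ^+ 2 - v * b ^+ 2 + 2%:R * (v * b ^+ 2) by ring.
  split.
  + have -> : d ^+ 2 * a ^+ 2 + c ^+ 2 * b ^+ 2 = (a * d - b * c) ^+ 2 + 2%:R * (a * b * c * d) by ring.
    by rewrite two0 mul0r addr0 expf_neq0.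
  + by rewrite E1 two0 mul0r addr0.
  + rewrite E1 two0 mul0r addr0.
    have -> : d ^+ 2 * v + c ^+ 2 = - (c ^+ 2 - v * d ^+ 2) + 2%:R * (c ^+ 2) by ring.
    rewrite two0 mul0r addr0; apply: (mulIf nz); rewrite mulfVK //.
    apply: (mulfI D0); rewrite mulrA (mulrC D) -mulrA -e0 mulr1.
    by rewrite mulrN -e1 opprK.
- split; first exact/negP.
  exists ((D * (a * d - b * c)) ^+ 2); split.
  + by rewrite expf_neq0 // mulf_neq0.
  + by exists (D * (a * d - b * c)).
  + have two0 : (2%:R : F) != 0 by rewrite -char2E'.
    have e3 : a * c - v * b * d = 0.
      by move: e2 => /eqP; rewrite !mulf_eq0 (negPf two0) (negPf D0) /= => /eqP.
    have -> : v' = - (D * (c ^+ 2 - v * d ^+ 2)) * (D * (a ^+ 2 - v * b ^+ 2)).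
      by rewrite -e0 -e1 mulr1 opprK.
    have -> : - (D * (c ^+ 2 - v * d ^+ 2)) * (D * (a ^+ 2 - v * b ^+ 2)) =
       v * (D * (a * d - b * c)) ^+ 2 - D ^+ 2 * (a * c - v * b * d) ^+ 2 by ring.
    by rewrite e3 expr0n /= mulr0 subr0.
Qed.

End Inv.



Section Inv2.
Variable F : fieldType.

Lemma inv_BB (v v' : F) : 2%N \in [pchar F] ->
  sm_equiv (cm (CB v) 2 2 2) (cm (CB v') 2 2 2) -> exception (CB v) (CB v').
Proof.
move=> ch2 /form_equiv [D [a [b [c [d [D0 dT H]]]]]].
have two0 : (2%:R : F) = 0 by apply/eqP; rewrite -char2E'.
have h10 := H 1 0; have h01 := H 0 1; have h11 := H 1 1.
rewrite !formCB in h10 h01 h11.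
have e0 : 1 = D * (a ^+ 2 + a * b - v * b ^+ 2) by from h10.
have e1 : - v' = D * (c ^+ 2 + c * d - v * d ^+ 2) by from h01.
have e2 : 1 + 1 - v' = D * ((a + c) ^+ 2 + (a + c) * (b + d) - v * (b + d) ^+ 2) by from h11.
have eY : D * (b * c - a * d) = 1.
  have -> : D * (b * c - a * d) =
    D * ((a + c) ^+ 2 + (a + c) * (b + d) - v * (b + d) ^+ 2)
    - D * (a ^+ 2 + a * b - v * b ^+ 2) - D * (c ^+ 2 + c * d - v * d ^+ 2)
    - 2%:R * (D * (a * c + a * d - v * b * d)) by ring.
  by rewrite -e0 -e1 -e2 two0 mul0r subr0; ring.
split => //; exists (D * (a * c + a * d - v * b * d)).
have -> : v' = - (D * (c ^+ 2 + c * d - v * d ^+ 2)) * (D * (a ^+ 2 + a * b - v * b ^+ 2)).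
  by rewrite -e0 -e1 mulr1 opprK.
set X := a * c + a * d - v * b * d; set Y := b * c - a * d.
have -> : - (D * (c ^+ 2 + c * d - v * d ^+ 2)) * (D * (a ^+ 2 + a * b - v * b ^+ 2)) =
  - (D * X) ^+ 2 - (D * X) * (D * Y) + v * (D * Y) ^+ 2 by rewrite /X /Y; ring.
rewrite eY mulr1 expr1n mulr1.
have -> : - (D * X) ^+ 2 - D * X + v = v + D * X + (D * X) ^+ 2 - 2%:R * (D * X + (D * X) ^+ 2) by ring.
by rewrite two0 mul0r subr0.
Qed.

Lemma inv_AB (v v' : F) : 2%N \in [pchar F] ->
  sm_equiv (cm (CA v) 2 2 2) (cm (CB v') 2 2 2) -> False.
Proof.
move=> ch2 /form_equiv [D [a [b [c [d [D0 dT H]]]]]].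
have two0 : (2%:R : F) = 0 by apply/eqP; rewrite -char2E'.
have h10 := H 1 0; have h01 := H 0 1; have h11 := H 1 1.
rewrite !formCB !formCA in h10 h01 h11.
have e0 : 1 = D * (a ^+ 2 - v * b ^+ 2) by from h10.
have e1 : - v' = D * (c ^+ 2 - v * d ^+ 2) by from h01.
have e2 : 1 + 1 - v' = D * ((a + c) ^+ 2 - v * (b + d) ^+ 2) by from h11.
have : (1 : F) = 2%:R * (D * (a * c - v * b * d)).
  have -> : 2%:R * (D * (a * c - v * b * d)) =
    D * ((a + c) ^+ 2 - v * (b + d) ^+ 2) - D * (a ^+ 2 - v * b ^+ 2) - D * (c ^+ 2 - v * d ^+ 2) by ring.
  by rewrite -e0 -e1 -e2; ring.
by rewrite two0 mul0r => /eqP; rewrite oner_eq0.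
Qed.

Lemma inv_BA (v v' : F) :
  sm_equiv (cm (CB v) 2 2 2) (cm (CA v') 2 2 2) -> 2%N \in [pchar F] -> False.
Proof.
move=> /form_equiv [D [a [b [c [d [D0 dT H]]]]]] ch2.
have two0 : (2%:R : F) = 0 by apply/eqP; rewrite -char2E'.
have h10 := H 1 0; have h01 := H 0 1; have h11 := H 1 1.
rewrite !formCA !formCB in h10 h01 h11.
have e0 : 1 = D * (a ^+ 2 + a * b - v * b ^+ 2) by from h10.
have e1 : - v' = D * (c ^+ 2 + c * d - v * d ^+ 2) by from h01.
have e2 : 1 - v' = D * ((a + c) ^+ 2 + (a + c) * (b + d) - v * (b + d) ^+ 2) by from h11.
have : D * (a * d - b * c) = 0.
  have -> : D * (a * d - b * c) =
    D * ((a + c) ^+ 2 + (a + c) * (b + d) - v * (b + d) ^+ 2)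
    - D * (a ^+ 2 + a * b - v * b ^+ 2) - D * (c ^+ 2 + c * d - v * d ^+ 2)
    - 2%:R * (D * (a * c + b * c - v * b * d)) by ring.
  by rewrite -e0 -e1 -e2 two0 mul0r subr0; ring.
by move/eqP; rewrite mulf_eq0 (negPf D0) (negPf dT).
Qed.

Lemma inv_DA0 : sm_equiv (cm (F:=F) CD 2 2 2) (cm (CA 0) 2 2 2) -> False.
Proof.
move=> /form_equiv [D [a [b [c [d [D0 dT H]]]]]].
have h10 := H 1 0; have h01 := H 0 1; have h11 := H 1 1.
rewrite !formCD !formCA in h10 h01 h11.
have e0 : 1 = D * (a * b) by from h10.
have e1 : 0 = D * (c * d) by from h01.
have e2 : D * (a * d + c * b) = 0.
  have -> : D * (a * d + c * b) = D * ((a + c) * (b + d)) - D * (a * b) - D * (c * d) by ring.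
  by rewrite -e0 -e1 -(etrans h11 (_ : _ = D * ((a + c) * (b + d)))); [ring | ring].
have : c * d = 0.
  by move/esym/eqP: e1; rewrite mulf_eq0 (negPf D0) => /eqP.
move/eqP; rewrite mulf_eq0 => /orP[/eqP c0|/eqP d0].
- move: e2; rewrite c0 mul0r addr0 => /eqP; rewrite mulf_eq0 (negPf D0) /=.
  by move: dT; rewrite c0 mulr0 subr0 => /negPf ->.
- move: e2; rewrite d0 mulr0 add0r => /eqP; rewrite mulf_eq0 (negPf D0) /=.
  by move: dT; rewrite d0 mulr0 sub0r oppr_eq0 mulrC => /negPf ->.
Qed.

Definition wit (A : smat F 3 2 2) := exists (c0 c1 : F) (u : 'cV[F]_2),
  [/\ (c0 != 0) || (c1 != 0), u != 0 & (c0 *: sl A 0 + c1 *: sl A 1) *m u = 0].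

Lemma wit_equiv (A B : smat F 3 2 2) : sm_equiv A B -> wit B -> wit A.
Proof.
move=> /slices_of_equiv [R [S [T [uR uS uT H]]]] [c0 [c1 [u [hc hu hB]]]].
exists (T 0 0 * c0 + T 0 1 * c1), (T 1 0 * c0 + T 1 1 * c1), (S *m u); split.
- rewrite -negb_and; apply/negP => /andP [/eqP d0 /eqP d1]; move: hc; apply/negP.
  move: uT; rewrite unit2 det2 => dT.
  have E0 : c0 * (T 0 0 * T 1 1 - T 0 1 * T 1 0) = T 1 1 * (T 0 0 * c0 + T 0 1 * c1) - T 0 1 * (T 1 0 * c0 + T 1 1 * c1) by ring.
  have E1 : c1 * (T 0 0 * T 1 1 - T 0 1 * T 1 0) = T 0 0 * (T 1 0 * c0 + T 1 1 * c1) - T 1 0 * (T 0 0 * c0 + T 0 1 * c1) by ring.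
  rewrite d0 d1 !mulr0 subr0 in E0 E1.
  move/eqP: E0; move/eqP: E1; rewrite !mulf_eq0 (negPf dT) !orbF => /eqP -> /eqP ->.
  by rewrite eqxx.
- apply/negP => /eqP hSu; move: hu; apply/negP/negPn/eqP.
  by rewrite -(mulKmx uS u) hSu mulmx0.
- have : R^T *m ((T 0 0 * c0 + T 0 1 * c1) *: sl A 0 + (T 1 0 * c0 + T 1 1 * c1) *: sl A 1) *m (S *m u) = 0.
    rewrite mulmxA -hB; congr (_ *m _).
    rewrite !H !sum2.
    by apply/matrixP => i j; repeat rewrite ?mxE ?sum2 ?big_ord_recl ?big_ord0 /=; ring.
  move/(congr1 (mulmx (invmx R^T))); rewrite mulmx0 -!mulmxA mulKmx ?unitmx_tr //.
Qed.

Lemma wit_C5 : wit (cm (F:=F) C5 3 2 2).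
Proof.
exists 0, 1, (\col_i (i == 0)%:R); split.
- by rewrite oner_eq0 eqxx orbT.
- by apply/negP => /eqP /matrixP /(_ 0 0); rewrite !mxE /= => /eqP; rewrite oner_eq0.
- apply/matrixP => i j; rewrite mxE sum2 !mxE /=.
  by case: (ord3P i) => -> /=; ring.
Qed.

Lemma nowit_C6 : wit (cm (F:=F) C6 3 2 2) -> False.
Proof.
move=> [c0 [c1 [u [hc hu hB]]]].
have E i := congr1 (fun M : 'M[F]_(3, 1) => M i 0) hB.
have E0 := E ord0; have E1 := E (lift ord0 ord0); have E2 := E (lift ord0 (lift ord0 ord0)).
rewrite /= !mxE !sum2 !mxE /= in E0 E1 E2.
have r0 : c0 * u 0 0 = 0 by from E0.
have r1 : c1 * u 0 0 + c0 * u 1 0 = 0 by from E1.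
have r2 : c1 * u 1 0 = 0 by from E2.
have u0 : u = 0 -> False by move=> h; move: hu; rewrite h eqxx.
apply: u0; apply/matrixP => i j; rewrite (ord1 j) mxE.
have [z0|z0] := eqVneq c0 0.
  move: hc; rewrite z0 eqxx /= => z1.
  have v1 : u 1 0 = 0 by move/eqP: r2; rewrite mulf_eq0 (negPf z1) => /eqP.
  have v0 : u 0 0 = 0 by move: r1; rewrite v1 mulr0 addr0 => /eqP; rewrite mulf_eq0 (negPf z1) => /eqP.
  by case: (ord2P i) => ->.
have v0 : u 0 0 = 0 by move/eqP: r0; rewrite mulf_eq0 (negPf z0) => /eqP.
have v1 : u 1 0 = 0 by move: r1; rewrite v0 mulr0 add0r => /eqP; rewrite mulf_eq0 (negPf z0) => /eqP.
by case: (ord2P i) => ->.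
Qed.

Lemma inv_56 : sm_equiv (cm (F:=F) C5 3 2 2) (cm C6 3 2 2) -> False.
Proof. by move/sm_equiv_sym/wit_equiv/(_ wit_C5)/nowit_C6. Qed.

Lemma inv_65 : sm_equiv (cm (F:=F) C6 3 2 2) (cm C5 3 2 2) -> False.
Proof. by move/wit_equiv/(_ wit_C5)/nowit_C6. Qed.

End Inv2.


Section Constr.
Variable F : fieldType.

Lemma toC (A B : smat F 2 2 2) a b c d (K : 'M[F]_2) :
  a * d - b * c != 0 -> \det (a *: sl A 0 + b *: sl A 1) != 0 ->
  (a *: sl A 0 + b *: sl A 1) *m K = c *: sl A 0 + d *: sl A 1 ->
  ~~ [&& K 0 1 == 0, K 1 0 == 0 & K 0 0 == K 1 1] ->
  sl B 0 = 1%:M -> sl B 1 = comp2 K -> sm_equiv A B.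
Proof.
set X := a *: sl A 0 + _; set Y := c *: sl A 0 + _ => hdet dX hK nsc hB0 hB1.
have uX : X \in unitmx by rewrite unit2.
have eK : invmx X *m Y = K by rewrite -hK mulKmx.
have [u0 [u1 uP]] := cyc_exists nsc.
apply: (@core _ A B a b c d (cyc K u0 u1)) => //.
by rewrite -/Y -hK hB1 -!mulmxA; congr (_ *m _); exact: cyc_comp.
Qed.

Lemma neq0_eq (x y : F) : x = y -> y != 0 -> x != 0.
Proof. by move=> ->. Qed.

Lemma char2_two : 2%N \in [pchar F] -> (2%:R : F) = 0.
Proof. by move=> h; apply/eqP; rewrite -char2E'. Qed.

Lemma K1 (v r : F) : r != 0 -> sm_equiv (cm (CA v) 2 2 2) (cm (CA (v * r ^+ 2)) 2 2 2).
Proof.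
move=> r0; apply: (@toC _ _ 1 0 0 r (mk2 0 (r * v) r 0)).
- by rewrite mul1r mul0r subr0.
- by rewrite slCA0 slCA1 det2 !mxE /=; apply: (neq0_eq (y := 1)); [ring | exact: oner_neq0].
- by rewrite slCA0 slCA1; apply: mx2P; rewrite !mul2E !mxE /=; ring.
- by rewrite !mxE /= (negPf r0) andbF.
- exact: slCA0.
- rewrite slCA1 /comp2 /tr2 det2 !mxE /=; congr mk2; ring.
Qed.

Lemma K2 (v a b c d : F) : 2%N \in [pchar F] ->
  (a * d - b * c) ^+ 2 != 0 -> a ^+ 2 - b ^+ 2 * v != 0 ->
  sm_equiv (cm (CA v) 2 2 2) (cm (CA ((d ^+ 2 * v + c ^+ 2) / (b ^+ 2 * v + a ^+ 2))) 2 2 2).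
Proof.
move=> ch2 hT hD; have two0 := char2_two ch2.
have hT' : a * d - b * c != 0 by move: hT; rewrite expf_eq0 /= => ->.
set De := a ^+ 2 - b ^+ 2 * v.
apply: (@toC _ _ a b c d (mk2 ((a * c - b * d * v) / De) ((a * d - b * c) / De * v)
                              ((a * d - b * c) / De) ((a * c - b * d * v) / De))) => //.
- rewrite slCA0 slCA1 det2 !mxE /=.
  by apply: (neq0_eq (y := De)) => //; rewrite /De; ring.
- rewrite slCA0 slCA1; apply: mx2P; rewrite !mul2E !mxE /=; rewrite /De; field; exact: hD.
- have hr : (a * d - b * c) / De != 0 by rewrite mulf_neq0 ?invr_eq0.
  by rewrite !mxE /= (negPf hr) andbF.
- exact: slCA0.
- rewrite slCA1 /comp2 /tr2 det2 !mxE /=; congr mk2.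
    have -> : b ^+ 2 * v + a ^+ 2 = De + 2%:R * (b ^+ 2 * v) by rewrite /De; ring.
    have -> : d ^+ 2 * v + c ^+ 2 = (d ^+ 2 * v - c ^+ 2) + 2%:R * c ^+ 2 by ring.
    rewrite two0 !mul0r !addr0; rewrite /De; field; exact: hD.
  have -> : (a * c - b * d * v) / De + (a * c - b * d * v) / De =
     2%:R * ((a * c - b * d * v) / De) by ring.
  by rewrite two0 mul0r.
Qed.

Lemma K3 (v be : F) : 2%N \in [pchar F] ->
  sm_equiv (cm (CB v) 2 2 2) (cm (CB (v + be + be ^+ 2)) 2 2 2).
Proof.
move=> ch2; have two0 := char2_two ch2.
apply: (@toC _ _ 1 0 be 1 (mk2 be v 1 (be + 1))).
- by rewrite !mul1r mul0r subr0 oner_eq0.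
- by rewrite slCB0 slCB1 det2 !mxE /=; apply: (neq0_eq (y := 1)); [ring | exact: oner_neq0].
- by rewrite slCB0 slCB1; apply: mx2P; rewrite !mul2E !mxE /=; ring.
- by rewrite !mxE /= oner_eq0 andbF.
- exact: slCB0.
- rewrite slCB1 /comp2 /tr2 det2 !mxE /=; congr mk2.
    have -> : - (be * (be + 1) - v * 1) = v + be + be ^+ 2 - 2%:R * (be + be ^+ 2) by ring.
    by rewrite two0 mul0r subr0.
  have -> : be + (be + 1) = 1 + 2%:R * be by ring.
  by rewrite two0 mul0r addr0.
Qed.

Lemma K4 (s : F) : ~ (2%N \in [pchar F]) -> s != 0 ->
  sm_equiv (cm CD 2 2 2) (cm (CA (s ^+ 2)) 2 2 2).
Proof.
move=> nch2 s0.
have two0 : (2%:R : F) != 0 by rewrite -char2E'; apply/negP.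
apply: (@toC _ _ 1 1 s (- s) (mk2 s 0 0 (- s))).
- apply: (neq0_eq (y := - (2%:R * s))); first by ring.
  by rewrite oppr_eq0 mulf_neq0.
- by rewrite slCD0 slCD1 det2 !mxE /=; apply: (neq0_eq (y := 1)); [ring | exact: oner_neq0].
- by rewrite slCD0 slCD1; apply: mx2P; rewrite !mul2E !mxE /=; ring.
- rewrite !mxE /= !eqxx /=; apply/negP => /eqP h.
  have : 2%:R * s = 0.
    have -> : 2%:R * s = s - - s by ring.
    by rewrite -h subrr.
  by move/eqP; rewrite mulf_eq0 (negPf two0) (negPf s0).
- by rewrite slCA0.
- rewrite slCA1 /comp2 /tr2 det2 !mxE /=; congr mk2; ring.
Qed.

Lemma K5 : 2%N \in [pchar F] -> sm_equiv (cm (F:=F) CD 2 2 2) (cm (CB 0) 2 2 2).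
Proof.
move=> ch2.
apply: (@toC _ _ 1 1 0 1 (mk2 0 0 0 1)).
- by rewrite !mul1r subr0 oner_eq0.
- by rewrite slCD0 slCD1 det2 !mxE /=; apply: (neq0_eq (y := 1)); [ring | exact: oner_neq0].
- by rewrite slCD0 slCD1; apply: mx2P; rewrite !mul2E !mxE /=; ring.
- by rewrite !mxE /= eq_sym oner_eq0 !andbF.
- by rewrite slCB0.
- rewrite slCB1 /comp2 /tr2 det2 !mxE /=; congr mk2; ring.
Qed.

End Constr.


Section Final.
Variable F : fieldType.

Lemma exc_equiv (c c' : canon F) : exception c c' -> cequiv c c'.
Proof.
case: c => [|||||||v|v|]; case: c' => [|||||||v'|v'|] //=.
- case=> [[nch2 [z [z0 [r hr] ev]]]|[ch2 [al [be [ga [de [[[d hd] [c hc] [b hb] [a ha]] [h1 h2 ev]]]]]]]].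
  + subst; split => //; apply: K1; by apply: contraNneq z0 => ->; rewrite expr0n.
  + subst; split => //; apply: K2 => //.
      have two0 := char2_two ch2.
      have -> : (a * d - b * c) ^+ 2 = d ^+ 2 * a ^+ 2 + c ^+ 2 * b ^+ 2 - 2%:R * (a * b * c * d) by ring.
      by rewrite two0 mul0r subr0.
    have two0 := char2_two ch2.
    have -> : a ^+ 2 - b ^+ 2 * v = b ^+ 2 * v + a ^+ 2 - 2%:R * (b ^+ 2 * v) by ring.
    by rewrite two0 mul0r subr0.
- case=> ch2 [be ->]; split => //; exact: K3.
Qed.

Lemma part2 (c c' : canon F) : in_list c -> in_list c' ->
  (cequiv c c' <-> (c = c' \/ exception c c')).
Proof.
move=> hc hc'; split.
- case: c hc => [|||||||v|v|] hc; case: c' hc' => [|||||||v'|v'|] hc' //;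
    rewrite /cequiv /= => -[hd he]; try discriminate hd; try by left.
  + by case: (inv_56 he).
  + by case: (inv_65 he).
  + by right; apply: inv_AA.
  + by case: (inv_AB hc' he).
  + by case: (inv_BA he hc).
  + by right; apply: inv_BB.
- case=> [<-|]; last exact: exc_equiv.
  rewrite /cequiv; case E: (cdims c) => [[m n] q]; split => //.
  exact: sm_equiv_refl.
Qed.

Lemma uniq_ac m n q (c c' : canon F) : in_list_ac c -> in_list_ac c' ->
  cdims c = (m, n, q) -> cdims c' = (m, n, q) ->
  sm_equiv (cm c m n q) (cm c' m n q) -> c' = c.
Proof.
case: c => [|||||||v|v|]; case: c' => [|||||||v'|v'|] //= h h' hd hd';
  rewrite -hd in hd'; try discriminate hd'; try done;
  case: hd => <- <- <- he.
- by case: (inv_56 he).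
- by case: (inv_65 he).
- by rewrite h h'.
- by rewrite h in he; case: (inv_DA0 (sm_equiv_sym he)).
- by rewrite h' in he; case: (inv_DA0 he).
Qed.

Lemma closed_sqrt (v : F) : GRing.closed_field_axiom F -> exists s, s ^+ 2 = v.
Proof.
move=> cl; have [s hs] := cl 2%N (fun i => if i == 0%N then v else 0) isT.
by exists s; rewrite hs !big_ord_recl big_ord0 /= expr0 mulr1 mul0r !addr0.
Qed.

Lemma closed_root (v : F) : GRing.closed_field_axiom F -> exists s, v + s + s ^+ 2 = 0.
Proof.
move=> cl; have [s hs] := cl 2%N (fun i => if i == 0%N then - v else - 1) isT.
exists s; move: hs; rewrite !big_ord_recl big_ord0 /= expr0 expr1 mulr1 addr0 => ->.
ring.
Qed.

Lemma part3 : GRing.closed_field_axiom F ->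
   forall (m n q : nat) (A : smat F m n q),
     (0 < m)%N -> (0 < n)%N -> (0 < q)%N -> (n <= 2)%N -> (q <= 2)%N ->
     sm_regular A ->
     exists c : canon F, [/\ in_list_ac c, equiv_to A c &
       forall c' : canon F, in_list_ac c' -> equiv_to A c' -> c' = c].
Proof.
move=> cl m n q A hm hn hq hn2 hq2 reg.
have [c0 [hc0 [hd0 he0]]] := part1 hm hn hq hn2 hq2 reg.
suff [c [hc [hd he]]] : exists c, in_list_ac c /\ equiv_to A c.
  exists c; split => // c' hc' [hd' he'].
  apply: (uniq_ac hc hc' hd hd').
  exact: sm_equiv_trans (sm_equiv_sym he) he'.
move: hc0 hd0 he0; case: c0 => [|||||||v|v|] // hc0 hd0 he0;
  try by [eexists; split; [| exact: (conj hd0 he0)]].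
- move: (hd0) => /= [hm' hn' hq']; subst.
  have [s hs] := closed_sqrt v cl.
  have [ch2|nch2] := boolP (2%N \in [pchar F]).
    exists (CA 0); split => //; split => //.
    apply: (sm_equiv_trans he0).
    have h := K2 (v:=v) (a:=1) (b:=0) (c:=s) (d:=1) ch2.
    have e : (1 ^+ 2 * v + s ^+ 2) / (0 ^+ 2 * v + 1 ^+ 2) = 0 :> F.
      rewrite hs (_ : 0 ^+ 2 * v + 1 ^+ 2 = 1); last by ring.
      rewrite divr1 (_ : 1 ^+ 2 * v + v = 2%:R * v); last by ring.
      by rewrite char2_two // mul0r.
    rewrite e in h; apply: h.
      by apply: (neq0_eq (y := 1)); [ring | exact: oner_neq0].
    by apply: (neq0_eq (y := 1)); [ring | exact: oner_neq0].
  have [s0|s0] := eqVneq s 0.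
    exists (CA 0); split => //; split => //.
    by move: he0; rewrite -hs s0 expr0n.
  exists CD; split => //; split => //.
  apply: (sm_equiv_trans he0); rewrite -hs; apply: sm_equiv_sym.
  by apply: K4 => //; apply/negP.
- move: (hd0) => /= [hm' hn' hq']; subst.
  have [s hs] := closed_root v cl.
  exists CD; split => //; split => //.
  apply: (sm_equiv_trans he0); apply: (sm_equiv_trans (K3 v s hc0)).
  by rewrite hs; apply: sm_equiv_sym; apply: K5.
Qed.

End Final.


Unset Implicit Arguments.

Theorem theorem2 (F : fieldType) :
  (* existence of a canonical form *)
  (forall (m n q : nat) (A : smat F m n q),
     (0 < m)%N -> (0 < n)%N -> (0 < q)%N -> (n <= 2)%N -> (q <= 2)%N ->
     sm_regular A -> exists c : canon F, in_list c /\ equiv_to A c)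
  /\
  (* pairwise inequivalence except for the listed cases *)
  (forall c c' : canon F, in_list c -> in_list c' ->
     (cequiv c c' <-> (c = c' \/ exception c c')))
  /\
  (* algebraically closed case: exactly one of (1)-(7), A(0), D *)
  (GRing.closed_field_axiom F ->
   forall (m n q : nat) (A : smat F m n q),
     (0 < m)%N -> (0 < n)%N -> (0 < q)%N -> (n <= 2)%N -> (q <= 2)%N ->
     sm_regular A ->
     exists c : canon F, [/\ in_list_ac c, equiv_to A c &
       forall c' : canon F, in_list_ac c' -> equiv_to A c' -> c' = c]).
Proof.
split; first by move=> m n q A; apply: part1.
split; first by move=> c c'; apply: part2.
exact: part3.
Qed.
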